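(* Let $\pi$ be a qlg-$2$-sortable permutation. Then: (i) $\pi$ avoids the pattern $3214$; (ii) every occurrence of the pattern $52314$ in $\pi$ can be extended to an occurrence of one of the following patterns, where the dotted entries are the additional entries and the undotted entries form the given occurrence of $52314$: $63\dot{1}425$; $7\dot{2}\dot{1}4536$; $7\dot{3}\dot{1}4526$; $\dot{7}\dot{2}8\dot{1}4536$; $\dot{7}\dot{3}8\dot{1}4526$; $\dot{8}\dot{2}7\dot{1}4536$; $\dot{8}\dot{3}7\dot{1}4526$.
   Context: The $\mathfrak{D}^2\mathfrak{I}$ machine consists of two decreasing stacks $D_1,D_2$ followed in series by an increasing stack $I$. Elements of $D_1,D_2$ must be in decreasing order from top to bottom (top largest); elements of $I$ in increasing order from top to bottom (top smallest). Operations: $d_0$ pushes the next input element into $D_1$; $d_1$ moves the top of $D_1$ to $D_2$; $d_2$ moves the top of $D_2$ to $I$; $d_3$ pops the top of $I$ and appends it to the output. An operation is legal if it respects the stack restrictions; $d_3$ is legal if the popped element is the smallest among the elements not yet output, and also if no other operation is legal. The quasi left-greedy procedure performs at each step the first legal operation in the priority order $d_3\rhd d_1\rhd d_0\rhd d_2$. A permutation is qlg-$2$-sortable if this procedure outputs its elements in increasing order. An occurrence of a pattern with dotted entries extending a given occurrence of $52314$ means a set of entries of $\pi$ forming an occurrence of the full pattern, in which the entries corresponding to the undotted positions are exactly the given occurrence of $52314$. *)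

(* Defs.v *)
From mathcomp Require Import all_boot.
Set Implicit Arguments. Unset Strict Implicit. Unset Printing Implicit Defensive.

Definition is_perm (s : seq nat) : bool := perm_eq s (iota 1 (size s)).

(* State of the D^2 I machine.  Stacks are lists whose head is the top. *)
Record state := St { inp : seq nat; d1 : seq nat; d2 : seq nat;
                     istk : seq nat; out : seq nat }.

Definition remaining (st : state) : seq nat :=
  inp st ++ d1 st ++ d2 st ++ istk st.

Definition d0_legal (st : state) : bool :=
  match inp st, d1 st with
  | x :: _, [::] => true
  | x :: _, y :: _ => y < x
  | [::], _ => false
  end.
Definition d1_legal (st : state) : bool :=
  match d1 st, d2 st with
  | x :: _, [::] => true
  | x :: _, y :: _ => y < x
  | [::], _ => false
  end.
Definition d2_legal (st : state) : bool :=
  match d2 st, istk st with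
  | x :: _, [::] => true
  | x :: _, y :: _ => x < y
  | [::], _ => false
  end.
Definition d3_min_legal (st : state) : bool :=
  match istk st with
  | x :: _ => all (fun y => x <= y) (remaining st)
  | [::] => false
  end.

Definition do_d0 (st : state) : state :=
  match inp st with x :: r => St r (x :: d1 st) (d2 st) (istk st) (out st) | [::] => st end.
Definition do_d1 (st : state) : state :=
  match d1 st with x :: r => St (inp st) r (x :: d2 st) (istk st) (out st) | [::] => st end.
Definition do_d2 (st : state) : state :=
  match d2 st with x :: r => St (inp st) (d1 st) r (x :: istk st) (out st) | [::] => st end.
Definition do_d3 (st : state) : state :=
  match istk st with x :: r => St (inp st) (d1 st) (d2 st) r (rcons (out st) x) | [::] => st end.

(* Returns None when no operation is possible (machine is empty). *)
Definition qlg_step (st : state) : option state :=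
  if d3_min_legal st then Some (do_d3 st)
  else if d1_legal st then Some (do_d1 st)
  else if d0_legal st then Some (do_d0 st)
  else if d2_legal st then Some (do_d2 st)
  else if istk st is _ :: _ then Some (do_d3 st)
  else None.

Fixpoint qlg_run (fuel : nat) (st : state) : state :=
  match fuel with
  | 0 => st
  | f.+1 => match qlg_step st with Some st' => qlg_run f st' | None => st end
  end.

Definition init_state (s : seq nat) : state := St s [::] [::] [::] [::].

(* Each element undergoes exactly four operations, so 4n steps suffice. *)
Definition qlg_output (s : seq nat) : seq nat :=
  out (qlg_run (4 * size s) (init_state s)).

Definition qlg2_sortable (s : seq nat) : bool :=
  qlg_output s == sort leq s.

Definition occurrence (p s idx : seq nat) : Prop :=
  [/\ sorted ltn idx, size idx = size p, all (fun i => i < size s) idx &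
      forall a b, a < size p -> b < size p ->
        (nth 0 s (nth 0 idx a) < nth 0 s (nth 0 idx b)) = (nth 0 p a < nth 0 p b)].

Definition avoids (p s : seq nat) : Prop := forall idx, ~ occurrence p s idx.

(* A dotted pattern: the pattern together with a mask marking dotted entries. *)
Definition dpattern := (seq nat * seq bool)%type.

Definition extends_to (s idx : seq nat) (P : dpattern) : Prop :=
  exists J, occurrence P.1 s J /\ mask (map negb P.2) J = idx.

Definition dotted_list : seq dpattern :=
  [:: ([:: 6; 3; 1; 4; 2; 5], [:: false; false; true; false; false; false]);
      ([:: 7; 2; 1; 4; 5; 3; 6], [:: false; true; true; false; false; false; false]);
      ([:: 7; 3; 1; 4; 5; 2; 6], [:: false; true; true; false; false; false; false]);
      ([:: 7; 2; 8; 1; 4; 5; 3; 6], [:: true; true; false; true; false; false; false; false]);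
      ([:: 7; 3; 8; 1; 4; 5; 2; 6], [:: true; true; false; true; false; false; false; false]);
      ([:: 8; 2; 7; 1; 4; 5; 3; 6], [:: true; true; false; true; false; false; false; false]);
      ([:: 8; 3; 7; 1; 4; 5; 2; 6], [:: true; true; false; true; false; false; false; false])].

(* Main.v *)
Require Import Defs.
From mathcomp Require Import all_boot zify.
From Stdlib Require Import Classical.
Set Implicit Arguments. Unset Strict Implicit. Unset Printing Implicit Defensive.


Ltac cmpl := match goal with |- (?x < ?y) = _ => case: (ltnP x y) => ?; simpl; first [done | lia] end.

Definition Rl st := inp st ++ d1 st ++ d2 st.
Definition Bad st := ~~ sorted leq (out st) ||
  has (fun x => has (fun y => y < x) (remaining st)) (out st).

Record U (pi : seq nat) (st : state) : Prop := MkU {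
  u_uniq : uniq (remaining st ++ out st);
  u_perm : perm_eq (remaining st ++ out st) pi;
  u_drop : exists k, inp st = drop k pi;
  u_s1 : sorted gtn (d1 st);
  u_s2 : sorted gtn (d2 st);
  u_sI : sorted ltn (istk st) }.

Variant stepK (st : state) : state -> Prop :=
| SK3 x r : istk st = x :: r ->
   stepK st (St (inp st) (d1 st) (d2 st) r (rcons (out st) x))
| SK1 x r : d1 st = x :: r -> (forall t, t \in d2 st -> t < x) ->
   stepK st (St (inp st) r (x :: d2 st) (istk st) (out st))
| SK0 x r : inp st = x :: r -> (forall t, t \in d1 st -> t < x) -> d1_legal st = false ->
   stepK st (St r (x :: d1 st) (d2 st) (istk st) (out st))
| SK2 x r : d2 st = x :: r -> (forall t, t \in istk st -> x < t) ->
   d1_legal st = false -> d0_legal st = false ->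
   stepK st (St (inp st) (d1 st) r (x :: istk st) (out st)).

Lemma gtn_tr : transitive gtn. Proof. move=> y x z /= H1 H2; exact: ltn_trans H2 H1. Qed.
Lemma geq_tr : transitive geq. Proof. move=> y x z /= H1 H2; exact: leq_trans H2 H1. Qed.

Lemma sgt_head h t y : sorted gtn (h :: t) -> y \in t -> y < h.
Proof.
move=> /= Hp Hy.
have /allP := order_path_min gtn_tr Hp.
by move=> /(_ y Hy).
Qed.

Lemma slt_head h t y : sorted ltn (h :: t) -> y \in t -> h < y.
Proof.
move=> /= Hp Hy.
have /allP := order_path_min (leT := ltn) ltn_trans Hp.
by move=> /(_ y Hy).
Qed.

Lemma sgt_le h t y : sorted gtn (h :: t) -> y \in h :: t -> y <= h.
Proof. move=> Hs; rewrite in_cons => /orP [/eqP -> //|Hy]. exact: ltnW (sgt_head Hs Hy). Qed.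

Lemma slt_le h t y : sorted ltn (h :: t) -> y \in h :: t -> h <= y.
Proof. move=> Hs; rewrite in_cons => /orP [/eqP -> //|Hy]. exact: ltnW (slt_head Hs Hy). Qed.

Lemma sorted_cons_gt x s : (forall t, t \in s -> t < x) -> sorted gtn s -> sorted gtn (x :: s).
Proof. case: s => //= h t Hall Hs. by rewrite Hs andbT; apply: Hall; rewrite mem_head. Qed.

Lemma sorted_cons_lt x s : (forall t, t \in s -> x < t) -> sorted ltn s -> sorted ltn (x :: s).
Proof. case: s => //= h t Hall Hs. by rewrite Hs andbT; apply: Hall; rewrite mem_head. Qed.

Lemma sorted_tail (r : rel nat) x s : sorted r (x :: s) -> sorted r s.
Proof. exact: path_sorted. Qed.

Lemma step_K pi st st' : U pi st -> qlg_step st = Some st' -> stepK st st'.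
Proof.
case=> _ _ _ S1 S2 SI; rewrite /qlg_step.
case: ifP => [H3|_].
  move: H3; rewrite /d3_min_legal /do_d3; case E: (istk st) => [|x r] // _ [<-].
  exact: SK3.
case: ifP => [H1|N1].
  move: H1 S2; rewrite /d1_legal /do_d1; case E1: (d1 st) => [|x r] //.
  case E2: (d2 st) => [|y t] H S2 [<-]; rewrite -E2; apply: SK1 => // z.
    by rewrite E2.
  by rewrite E2 => /(sgt_le S2) => Hz; apply: leq_ltn_trans Hz H.
case: ifP => [H0|N0].
  move: H0 S1 N1; rewrite /d0_legal /do_d0; case Ei: (inp st) => [|x r] //.
  case E1: (d1 st) => [|y t] H S1 N1 [<-]; rewrite -E1; apply: SK0 => // z.
    by rewrite E1.
  by rewrite E1 => /(sgt_le S1) => Hz; apply: leq_ltn_trans Hz H.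
case: ifP => [H2|N2].
  move: H2 SI; rewrite /d2_legal /do_d2; case E2: (d2 st) => [|x r] //.
  case EI: (istk st) => [|y t] H SI [<-]; rewrite -EI; apply: SK2 => // z.
    by rewrite EI.
  by rewrite EI => /(slt_le SI) => Hz; apply: leq_trans H Hz.
rewrite /do_d3; case EI: (istk st) => [|x r] // [<-]; exact: SK3.
Qed.

Lemma perm_step st st' : stepK st st' -> perm_eq (remaining st' ++ out st') (remaining st ++ out st).
Proof.
rewrite /remaining; case=> [x r E|x r E _|x r E _ _|x r E _ _ _]; rewrite E /= -?cats1;
 apply/permP => p; rewrite ?count_cat /= ?count_cat /=; lia.
Qed.

Lemma drop_next (s : seq nat) k x r : drop k s = x :: r -> drop k.+1 s = r.
Proof. by move=> H; rewrite -add1n -drop_drop H drop1. Qed.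

Lemma U_step pi st st' : U pi st -> stepK st st' -> U pi st'.
Proof.
move=> [Uu Up [k Ud] S1 S2 SI] K.
have Hp := perm_step K.
constructor.
- by rewrite (perm_uniq Hp).
- exact: perm_trans Hp Up.
- case: K Ud => /= [x r E|x r E _|x r E _ _|x r E _ _ _] Ud; try by exists k.
  by exists k.+1; symmetry; apply: (drop_next (x:=x)); rewrite -Ud E.
- case: K Ud => /= [x r E|x r E _|x r E Hx _|x r E _ _ _] Ud //.
    by move: S1; rewrite E => /sorted_tail.
  exact: sorted_cons_gt.
- case: K Ud => /= [x r E|x r E Hx|x r E _ _|x r E _ _ _] Ud //.
    exact: sorted_cons_gt.
  by move: S2; rewrite E => /sorted_tail.
- case: K Ud => /= [x r E|x r E Hx|x r E _ _|x r E Hx _ _] Ud //.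
    by move: SI; rewrite E => /sorted_tail.
  exact: sorted_cons_lt.
Qed.

Lemma sorted_rcons_le s x z : sorted leq (rcons s x) -> z \in s -> z <= x.
Proof.
move=> Hs Hz.
have H' : sorted geq (rev (rcons s x)) by rewrite rev_sorted.
rewrite rev_rcons /= in H'.
have /allP := order_path_min geq_tr H'.
by move=> /(_ z); rewrite mem_rev => /(_ Hz).
Qed.

Lemma pop_bad st x r y : istk st = x :: r -> y \in remaining st -> y < x ->
  Bad (St (inp st) (d1 st) (d2 st) r (rcons (out st) x)).
Proof.
move=> E Hy Hyx; rewrite /Bad /=; apply/orP; right; apply/hasP; exists x.
  by rewrite mem_rcons mem_head.
apply/hasP; exists y => //. move: Hy; rewrite /remaining E /= !mem_cat in_cons.
have Hne : (y == x) = false by apply/negbTE; rewrite neq_ltn Hyx.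
by rewrite Hne.
Qed.

Lemma rem_perm st st' : stepK st st' -> (forall x r, istk st = x :: r -> False) ->
  out st' = out st /\ remaining st' =i remaining st.
Proof.
move=> K H; case: K H => [x r E|x r E _|x r E _ _|x r E _ _ _] H.
- by case: (H _ _ E).
all: split => //; apply: perm_mem; rewrite /remaining E /=; apply/permP => p;
  rewrite ?count_cat /= ?count_cat /=; lia.
Qed.

Lemma Bad_same st st' : out st' = out st -> remaining st' =i remaining st -> Bad st -> Bad st'.
Proof.
move=> Ho Hr; rewrite /Bad Ho; case/orP => [->//|H]; apply/orP; right.
have Ep : (fun x => has (fun y => y < x) (remaining st')) =1 (fun x => has (fun y => y < x) (remaining st)).
  by move=> x; apply: eq_has_r.
by rewrite (eq_has Ep).
Qed.

Lemma Bad_step st st' : Bad st -> stepK st st' -> Bad st'.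
Proof.
move=> HB K; case: K HB => [x r E|x r E Hx|x r E Hx H1|x r E Hx H1 H0] HB.
- move: HB; rewrite /Bad /= => /orP [Hns|/hasP [z Hz /hasP [y Hy Hyz]]].
    apply/orP; left; apply: contra Hns; apply: subseq_sorted; [exact: leq_trans | exact: subseq_rcons].
  case: (eqVneq y x) => [Eyx|Hne].
    apply/orP; left; apply/negP => Hs; have := sorted_rcons_le Hs Hz; rewrite -Eyx; lia.
  apply/orP; right; apply/hasP; exists z; first by rewrite mem_rcons in_cons Hz orbT.
  apply/hasP; exists y => //; move: Hy; rewrite /remaining E /= !mem_cat in_cons (negbTE Hne) //.
all: apply: (Bad_same _ _ HB) => //=; apply: perm_mem; rewrite /remaining E /=;
  apply/permP => p; rewrite ?count_cat /= ?count_cat /=; lia.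
Qed.

Definition msr st := 4 * size (inp st) + 3 * size (d1 st) + 2 * size (d2 st) + size (istk st).

Lemma msr_step st st' : stepK st st' -> (msr st').+1 = msr st.
Proof. case=> [x r E|x r E _|x r E _ _|x r E _ _ _]; rewrite /msr E /=; lia. Qed.

Lemma none_empty st : qlg_step st = None -> remaining st = [::].
Proof.
rewrite /qlg_step; case: ifP => // _; case: ifP => // H1; case: ifP => // H0; case: ifP => // H2.
case EI: (istk st) => [|x r] // _.
move: H2; rewrite /d2_legal EI; case E2: (d2 st) => [|y t] //= _.
move: H1; rewrite /d1_legal E2; case E1: (d1 st) => // _.
move: H0; rewrite /d0_legal E1; case Ei: (inp st) => // _.
by rewrite /remaining Ei E1 E2 EI.
Qed.

Lemma run_empty pi f st : U pi st -> msr st <= f -> remaining (qlg_run f st) = [::].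
Proof.
elim: f st => [|f IH] st HU Hm /=.
  move: Hm; rewrite /msr /remaining leqn0.
  case: (inp st) => [|??]; case: (d1 st) => [|??]; case: (d2 st) => [|??]; case: (istk st) => [|??] //=; lia.
case E: (qlg_step st) => [st'|]; last exact: none_empty.
have K := step_K HU E; apply: IH; first exact: U_step K.
have := msr_step K; lia.
Qed.

Lemma U_cat pi st : U pi st -> uniq (inp st ++ d1 st ++ d2 st ++ istk st ++ out st).
Proof. by case=> Uu _ _ _ _ _; move: Uu; rewrite /remaining -!catA. Qed.

Lemma uniq_dis (s1 s2 : seq nat) x : uniq (s1 ++ s2) -> x \in s1 -> x \in s2 -> False.
Proof. rewrite cat_uniq => /and3P [_ /hasPn H _] H1 H2. by move: (H x H2); rewrite H1. Qed.

Lemma uniq_catR (s1 s2 : seq nat) : uniq (s1 ++ s2) -> uniq s2.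
Proof. by rewrite cat_uniq => /and3P []. Qed.

Lemma dis12 pi st x : U pi st -> x \in d1 st -> x \in d2 st -> False.
Proof. move=> /U_cat /uniq_catR H H1 H2; apply: (uniq_dis H H1); by rewrite mem_cat H2. Qed.
Lemma dis1I pi st x : U pi st -> x \in d1 st -> x \in istk st -> False.
Proof. move=> /U_cat /uniq_catR H H1 H2; apply: (uniq_dis H H1); by rewrite !mem_cat H2 ?orbT ?orTb. Qed.
Lemma dis2I pi st x : U pi st -> x \in d2 st -> x \in istk st -> False.
Proof. move=> /U_cat /uniq_catR /uniq_catR H H1 H2; apply: (uniq_dis H H1); by rewrite !mem_cat H2 ?orbT ?orTb. Qed.
Lemma disIO pi st x : U pi st -> x \in istk st -> x \in out st -> False.
Proof. move=> /U_cat /uniq_catR /uniq_catR /uniq_catR H H1 H2; exact: (uniq_dis H H1). Qed.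

Lemma U_uniqpi pi st : U pi st -> uniq pi.
Proof. by case=> Uu Up _ _ _ _; rewrite -(perm_uniq Up). Qed.

Lemma index_drop (pi : seq nat) k x : uniq pi -> x \in drop k pi ->
  index x pi = k + index x (drop k pi).
Proof.
move=> Hu Hx.
have Hk : k <= size pi.
  rewrite leqNgt; apply/negP => H; move: Hx; by rewrite drop_oversize // ltnW.
have Hnt : x \notin take k pi.
  move: Hu; rewrite -{1}(cat_take_drop k pi) cat_uniq => /and3P [_ /hasPn H _]; exact: H.
by rewrite -{1}(cat_take_drop k pi) index_cat (negbTE Hnt) size_takel.
Qed.

Lemma pos_inp pi st k x : U pi st -> inp st = drop k pi -> x \in inp st -> k <= index x pi.
Proof. move=> HU Hd; rewrite Hd => Hx; rewrite (index_drop (U_uniqpi HU) Hx); exact: leq_addr. Qed.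

Lemma pos_head pi st k x r : U pi st -> inp st = drop k pi -> inp st = x :: r -> index x pi = k.
Proof.
move=> HU Hd E; have Hx : x \in drop k pi by rewrite -Hd E mem_head.
by rewrite (index_drop (U_uniqpi HU) Hx) -Hd E /= eqxx addn0.
Qed.

Lemma in_pi pi st x : U pi st -> x \in remaining st ++ out st -> x \in pi.
Proof. by case=> _ Up _ _ _ _; rewrite (perm_mem Up). Qed.

Lemma pos_inpI pi st k x : U pi st -> inp st = drop k pi -> x \in pi -> k <= index x pi -> x \in inp st.
Proof.
move=> HU Hd Hx Hk; rewrite Hd.
have Hi : index x pi < size pi by rewrite index_mem.
have -> : x = nth 0 (drop k pi) (index x pi - k) by rewrite nth_drop subnKC // nth_index.
apply: mem_nth; rewrite size_drop; apply: ltn_sub2r => //; exact: leq_ltn_trans Hk Hi.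
Qed.

Lemma pos_read pi st k x : U pi st -> inp st = drop k pi ->
  x \in d1 st ++ d2 st ++ istk st ++ out st -> index x pi < k.
Proof.
move=> HU Hd Hx; rewrite ltnNge; apply/negP => Hk.
have Hpi : x \in pi by apply: (in_pi HU); move: Hx; rewrite /remaining -!catA !mem_cat => H; apply/orP; right.
have Hi := pos_inpI HU Hd Hpi Hk.
exact: (uniq_dis (U_cat HU) Hi Hx).
Qed.

Lemma pos_inj (pi : seq nat) x y : x \in pi -> y \in pi -> index x pi = index y pi -> x = y.
Proof. by move=> Hx Hy E; rewrite -(nth_index 0 Hx) E nth_index. Qed.


Definition GI (pi : seq nat) st := forall x, x \in d1 st ->
  (exists2 w, w \in d2 st ++ istk st & x < w /\ index w pi < index x pi) \/
  (x = head 0 (d1 st) /\ forall t, t \in d2 st -> t < x).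

Lemma GI_step pi st st' : U pi st -> GI pi st -> stepK st st' -> Bad st' \/ GI pi st'.
Proof.
move=> HU HG K; case: K => [x0 r E|x0 r E Hx|x0 r E Hx H1|x0 r E Hx H1 H0].
- case Hh: (has (fun y => y < x0) (d1 st)).
    left; case/hasP: Hh => y Hy Hyx; apply: (pop_bad E _ Hyx).
    by rewrite /remaining !mem_cat Hy orbT.
  right => y /= Hy; case: (HG y Hy) => [[w Hw [Hyw Hp]]|H]; last by right.
  left; exists w => //; move: Hw; rewrite !mem_cat E in_cons.
  case: (eqVneq w x0) => [Ew|_] /=; last by [].
  move: Hh => /hasPn /(_ y Hy); rewrite -Ew Hyw //.
- right => y /= Hy.
  have Hy1 : y \in d1 st by rewrite E in_cons Hy orbT.
  case: (HG y Hy1) => [[w Hw [Hyw Hp]]|[Eh _]].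
    left; exists w => //=; by rewrite in_cons Hw orbT.
  have S1 := u_s1 HU; rewrite E in S1; have := sgt_head S1 Hy.
  by rewrite Eh E /=; lia.
- right => y /=; rewrite in_cons; case: (eqVneq y x0) => [->|Hne] /= Hy.
    case Hh: (has (fun t => x0 < t) (d2 st)).
      case/hasP: Hh => w Hw Hxw; left; exists w; first by rewrite mem_cat Hw.
      split => //; case: (u_drop HU) => k Hd.
      rewrite (pos_head HU Hd E); apply: (pos_read HU Hd); by rewrite !mem_cat Hw orbT.
    right; split => // t Ht.
    move: Hh => /hasPn /(_ t Ht); rewrite -leqNgt leq_eqVlt; case/orP => [/eqP Et|//].
    exfalso; case: (u_drop HU) => k Hd.
    have := pos_read HU Hd (x := t); rewrite !mem_cat Ht orbT => /(_ isT).
    by rewrite Et (pos_head HU Hd E) ltnn.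
  case: (HG y Hy) => [H|[Eh Hall]]; first by left.
  exfalso; move: H1; rewrite /d1_legal; case E1: (d1 st) Eh => [|h t] Eh; first by rewrite E1 in Hy.
  rewrite /= in Eh; subst h; case E2: (d2 st) Hall => [//|t2 r2] Hall.
  by rewrite Hall ?mem_head.
- right => y /= Hy; case: (HG y Hy) => [[w Hw [Hyw Hp]]|[Eh Hall]].
    left; exists w => //; move: Hw; rewrite !mem_cat E !in_cons; case: (w == x0); by rewrite ?orbT.
  right; split => // t Ht; apply: Hall; by rewrite E in_cons Ht orbT.
Qed.

Lemma U_init pi : is_perm pi -> U pi (init_state pi).
Proof.
move=> Hp; have Hu : uniq pi by rewrite (perm_uniq Hp) iota_uniq.
constructor => //=; rewrite /remaining /= ?cats0 //; by exists 0; rewrite drop0.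
Qed.

Lemma framework pi (C : state -> Prop) : is_perm pi -> qlg2_sortable pi -> C (init_state pi) ->
  (forall st st', U pi st -> GI pi st -> C st -> stepK st st' -> Bad st' \/ C st') ->
  (forall st, C st -> remaining st = [::] -> False) -> False.
Proof.
move=> Hp Hs HC Hstep Hne.
pose P := fun st => U pi st /\ (Bad st \/ (GI pi st /\ C st)).
have HP0 : P (init_state pi).
  split; first exact: U_init. right; split => // x.
have Hrun : forall f st, P st -> P (qlg_run f st).
  elim=> [|f IH] st HPs //=; case E: (qlg_step st) => [st'|] //; apply: IH.
  case: HPs => HU HB; have K := step_K HU E.
  split; first exact: U_step K.
  case: HB => [HB|[HG HC']]; first by left; exact: Bad_step HB K.
  case: (GI_step HU HG K) => [HB'|HG']; first by left.
  case: (Hstep _ _ HU HG HC' K) => [HB'|HC'']; [by left | by right].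
have [HUf Hfin] := Hrun (4 * size pi) _ HP0.
have Hem : remaining (qlg_run (4 * size pi) (init_state pi)) = [::].
  apply: (run_empty (U_init Hp)); rewrite /msr /=; lia.
case: Hfin => [HB|[_ HC']]; last exact: Hne _ HC' Hem.
move: HB; rewrite /Bad Hem; case/orP.
  move: Hs; rewrite /qlg2_sortable /qlg_output => /eqP ->; by rewrite sort_sorted //; exact: leq_total.
by case/hasP => x _ /=.
Qed.


Lemma inRl st y : (y \in Rl st) = [|| y \in inp st, y \in d1 st | y \in d2 st].
Proof. by rewrite /Rl !mem_cat. Qed.

Ltac bsplit := repeat match goal with H : is_true (_ || _) |- _ => case/orP: H => H end.
Ltac bfin := match goal with H : is_true ?b |- _ => rewrite H ?orbT ?orTb; done end.
Ltac mrw := rewrite ?inRl ?mem_cat ?in_cons ?mem_cat ?in_cons ?mem_cat ?in_cons /=.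
Ltac mt := mrw; let H := fresh "Hm" in move=> H; bsplit; try bfin.

Lemma Rl_rem st y : y \in Rl st -> y \in remaining st.
Proof. by rewrite inRl /remaining !mem_cat => /or3P [->|->|->]; rewrite ?orbT. Qed.

Definition J st := exists c a d, [/\ c \in istk st, a \in Rl st, d \in Rl st, a < c & c < d].

Lemma J_step pi st st' : U pi st -> J st -> stepK st st' -> Bad st' \/ J st'.
Proof.
move=> HU [c [a [d [Hc Ha Hd Hac Hcd]]]] K.
case: K => [x0 r E|x0 r E Hx|x0 r E Hx H1|x0 r E Hx H1 H0].
- case: (eqVneq c x0) => [Ec|Hne].
    left; apply: (pop_bad E (Rl_rem Ha)); by rewrite -Ec.
  right; exists c, a, d; split => //=; by move: Hc; rewrite E in_cons (negbTE Hne).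
- right; exists c, a, d; split => //; rewrite inRl /=; [move: Ha|move: Hd]; rewrite inRl E !in_cons;
    by case/or3P => [->|/orP [->|->]|->]; rewrite ?orbT.
- right; exists c, a, d; split => //; rewrite inRl /=; [move: Ha|move: Hd]; rewrite inRl E !in_cons;
    by case/or3P => [/orP [->|->]|->|->]; rewrite ?orbT.
- have S2 := u_s2 HU; rewrite E in S2.
  have Hxc : x0 < c by apply: Hx.
  case: (eqVneq d x0) => [Ed|Hdne]; first by exfalso; move: Hcd; rewrite Ed; lia.
  have Hd' : d \in Rl st' -> True by [].
  case: (eqVneq a x0) => [Ea|Hane].
  +
    subst a.
    have Hd2 : d \in inp st \/ d \in d1 st.
      move: Hd; rewrite inRl E in_cons (negbTE Hdne) /= => /or3P [->|->|Hr]; [by left|by right|].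
      by exfalso; have := sgt_head S2 Hr; lia.
    case E1: (d1 st) => [|h t].
      exfalso; case: Hd2 => [Hi|]; last by rewrite E1.
      move: H0; rewrite /d0_legal E1; by case: (inp st) Hi.
    have Hhx : h < x0.
      move: H1; rewrite /d1_legal E1 E => /negbT; rewrite -leqNgt leq_eqVlt => /orP [/eqP Eh|//].
      exfalso; apply: (dis12 HU (x := h)); by rewrite ?E1 ?E ?Eh mem_head.
    right; rewrite -E1; exists c, h, d; split => //=.
    * by rewrite in_cons Hc orbT.
    * by rewrite inRl E1 mem_head orbT.
    * by rewrite inRl /=; case: Hd2 => ->; rewrite ?orbT.
    * lia.
  + right; exists c, a, d; split => //=.
    * by rewrite in_cons Hc orbT.
    * by move: Ha; rewrite !inRl E in_cons (negbTE Hane).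
    * by move: Hd; rewrite !inRl E in_cons (negbTE Hdne).
Qed.

Lemma inp_later pi st b y : U pi st -> b \in inp st -> y \in pi -> index b pi < index y pi -> y \in inp st.
Proof.
move=> HU Hb Hy Hby; case: (u_drop HU) => k Hd.
have := pos_inp HU Hd Hb => Hk.
apply: (pos_inpI HU Hd Hy); exact: leq_trans Hk (ltnW Hby).
Qed.

Lemma inp_after pi st x0 r y : U pi st -> inp st = x0 :: r -> y \in pi -> index x0 pi < index y pi -> y \in r.
Proof.
move=> HU E Hy Hxy; case: (u_drop HU) => k Hd.
have Hx0 := pos_head HU Hd E.
have Hr : r = drop k.+1 pi by symmetry; apply: (drop_next (x := x0)); rewrite -Hd E.
rewrite Hr.
have Hi : index y pi < size pi by rewrite index_mem.
have -> : y = nth 0 (drop k.+1 pi) (index y pi - k.+1).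
  rewrite nth_drop subnKC ?nth_index //; by rewrite -Hx0.
apply: mem_nth; rewrite size_drop; apply: ltn_sub2r => //; rewrite -Hx0.
exact: leq_ltn_trans Hxy Hi.
Qed.

Lemma inp_stay st x0 r y : inp st = x0 :: r -> y \in inp st -> y != x0 -> y \in r.
Proof. by move=> E; rewrite E in_cons => /orP [->|//]. Qed.

Lemma inp_head_ne pi st x0 r y : U pi st -> inp st = x0 :: r -> y \in inp st -> index y pi < index x0 pi -> False.
Proof.
move=> HU E Hy Hlt; case: (u_drop HU) => k Hd.
have Hk := pos_inp HU Hd Hy; rewrite (pos_head HU Hd E) in Hlt.
by move: (leq_ltn_trans Hk Hlt); rewrite ltnn.
Qed.

Definition Z pi Aa Dd st := exists x y dd,
  [/\ x \in d1 st, y \in d1 st ++ d2 st, dd \in Rl st & [/\ Aa < x, x < y, y < dd & dd <= Dd]]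
  /\ [/\ Aa \in inp st, index Aa pi < index Dd pi & Dd \in pi].

Lemma Z_step pi Aa Dd st st' : U pi st -> Z pi Aa Dd st -> stepK st st' -> Bad st' \/ (Z pi Aa Dd st' \/ J st').
Proof.
move=> HU [x [y [dd [[Hx Hy Hdd [HAx Hxy Hydd HdD]] [HA HAD HD]]]]] K.
have HDi : Dd \in inp st by apply: (inp_later HU HA HD HAD).
have S1 := u_s1 HU; have S2 := u_s2 HU.
case: K => [x0 r E|x0 r E Hx0|x0 r E Hx0 H1|x0 r E Hx0 H1 H0].
- by right; left; exists x, y, dd.
- right; left; exists x, y, dd; split => //=.
  split => //=.
  + case: (eqVneq x x0) => [Ex|Hne]; last by move: Hx; rewrite E in_cons (negbTE Hne).
    exfalso; subst x0; move: Hy; rewrite mem_cat => /orP [Hy1|Hy2].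
      rewrite E in S1 Hy1; move: Hy1; rewrite in_cons => /orP [/eqP Eyx|Hyr].
        by move: Hxy; rewrite Eyx ltnn.
      have := sgt_head S1 Hyr; lia.
    have := Hx0 _ Hy2; lia.
  + by move: Hy; rewrite E; mt.
  + by move: Hdd; rewrite inRl E; mt.
- have HAr : Aa \in r.
    apply: (inp_stay E HA); apply/eqP => EA; subst x0.
    have := Hx0 _ Hx; lia.
  right; left; exists x, y, dd; split => //=.
  + split => //=; first by rewrite in_cons Hx orbT.
    * by move: Hy; mt.
    * by move: Hdd; rewrite inRl E; mt.
- rewrite E in S2.
  case: (eqVneq y x0) => [Ey|Hyne].
    subst x0; right; right; exists y, Aa, dd; split => //=.
    * by rewrite in_cons eqxx.
    * by rewrite inRl HA.
    * move: Hdd; rewrite !inRl E in_cons; case: (eqVneq dd y) => [Edd|_] /=; last by [].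
      by exfalso; move: Hydd; rewrite Edd ltnn.
    * lia.
  case: (eqVneq dd x0) => [Edd|Hddne].
    subst x0; right; right; exists dd, Aa, Dd; split => //=.
    * by rewrite in_cons eqxx.
    * by rewrite inRl HA.
    * by rewrite inRl HDi.
    * lia.
    * rewrite ltn_neqAle HdD andbT; apply/eqP => EdD; subst dd.
      by apply: (uniq_dis (U_cat HU) HDi); rewrite !mem_cat E mem_head orbT.
  right; left; exists x, y, dd; split => //=.
  split => //=.
  + move: Hy; rewrite !mem_cat E in_cons (negbTE Hyne) //.
  + move: Hdd; rewrite !inRl E in_cons (negbTE Hddne) //.
Qed.


Definition Ci pi a b c d st :=
  c \in inp st \/ ((c \in d1 st \/ c \in d2 st) /\ b \in inp st) \/ Z pi a d st \/ J st.

Lemma Ci_step pi a b c d st st' :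
  a < b -> b < c -> c < d -> a \in pi -> b \in pi -> d \in pi ->
  index c pi < index b pi -> index b pi < index a pi -> index a pi < index d pi ->
  U pi st -> Ci pi a b c d st -> stepK st st' -> Bad st' \/ Ci pi a b c d st'.
Proof.
move=> Hab Hbc Hcd Ha Hb Hd Pcb Pba Pad HU HC K.
case: HC => [Hc|[[Hc Hb']|[HZ|HJ]]].
- case: K => [x0 r E|x0 r E _|x0 r E Hx0 _|x0 r E _ _ _]; try by right; left.
  case: (eqVneq c x0) => [Ec|Hne].
    subst x0; right; right; left; split; first by left; rewrite /= mem_head.
    exact: (inp_after HU E).
  right; left => /=; exact: (inp_stay E Hc Hne).
- case: K => [x0 r E|x0 r E Hx0|x0 r E Hx0 _|x0 r E Hx0 H1 H0].
  + by right; right; left.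
  + right; right; left; split => //=; case: Hc => Hc; last by right; rewrite in_cons Hc orbT.
    move: Hc; rewrite E in_cons => /orP [/eqP ->|Hr]; [right; exact: mem_head| by left].
  + case: (eqVneq b x0) => [Eb|Hne].
      subst x0; case: Hc => Hc; first by have := Hx0 _ Hc; lia.
      right; right; right; left; exists b, c, d; split.
        split => //=; first by rewrite mem_head.
          by mrw; rewrite Hc ?orbT.
        by rewrite inRl /= (inp_after HU E Hd) // (ltn_trans Pba Pad).
      split => //=; exact: (inp_after HU E Ha).
    right; right; left; split => //=; last exact: (inp_stay E Hb' Hne).
    by case: Hc => Hc; [left; rewrite in_cons Hc orbT|right].
  + case: (eqVneq c x0) => [Ec|Hne].
      subst x0; right; right; right; right; exists c, a, d; split => //=.
      * by rewrite mem_head.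
      * by rewrite inRl (inp_later HU Hb' Ha Pba).
      * by rewrite inRl (inp_later HU Hb' Hd (ltn_trans Pba Pad)).
      * lia.
    right; right; left; split => //=; case: Hc => Hc; first by left.
    by right; move: Hc; rewrite E in_cons (negbTE Hne).
- case: (Z_step HU HZ K) => [HB|[HZ'|HJ']]; [by left|by right; right; right; left|by right; right; right; right].
- case: (J_step HU HJ K) => [HB|HJ']; [by left|by right; right; right; right].
Qed.

Lemma Ci_ne pi a b c d st : Ci pi a b c d st -> remaining st = [::] -> False.
Proof.
rewrite /remaining => HC E.
have Hin : forall y, y \in inp st ++ d1 st ++ d2 st ++ istk st -> False by move=> y; rewrite E.
case: HC => [Hc|[[_ Hb]|[[x [y [dd [_ [HA _ _]]]]]|[c' [a' [d' [_ Ha' _ _ _]]]]]]].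
- by apply: (Hin c); rewrite mem_cat Hc.
- by apply: (Hin b); rewrite mem_cat Hb.
- by apply: (Hin a); rewrite mem_cat HA.
- apply: (Hin a'); move: Ha'; rewrite /Rl !mem_cat => /or3P [->|->|->]; by rewrite ?orbT.
Qed.

Lemma occ_nth (p s idx : seq nat) a b : occurrence p s idx -> a < size p -> b < size p ->
  (nth 0 s (nth 0 idx a) < nth 0 s (nth 0 idx b)) = (nth 0 p a < nth 0 p b).
Proof. by case=> _ _ _ H; apply: H. Qed.

Lemma part_i pi : is_perm pi -> qlg2_sortable pi -> avoids [:: 3; 2; 1; 4] pi.
Proof.
move=> Hp Hs idx Hocc.
have Hu : uniq pi by rewrite (perm_uniq Hp) iota_uniq.
have Hocc' := Hocc; case: Hocc' => Hsort Hsz Hall _.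
case: idx Hocc Hsort Hsz Hall => [|i0 [|i1 [|i2 [|i3 [|??]]]]] //= Hocc Hsort _ Hall.
move: Hsort Hall => /and4P [Hi01 Hi12 Hi23 _] /and5P [Hi0 Hi1 Hi2 Hi3 _].
set c := nth 0 pi i0; set b := nth 0 pi i1; set a := nth 0 pi i2; set d := nth 0 pi i3.
have Hab : a < b by have := occ_nth Hocc (a := 2) (b := 1); rewrite /= => ->.
have Hbc : b < c by have := occ_nth Hocc (a := 1) (b := 0); rewrite /= => ->.
have Hcd : c < d by have := occ_nth Hocc (a := 0) (b := 3); rewrite /= => ->.
have Ic : index c pi = i0 by rewrite index_uniq.
have Ib : index b pi = i1 by rewrite index_uniq.
have Ia : index a pi = i2 by rewrite index_uniq.
have Id : index d pi = i3 by rewrite index_uniq.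
apply: (framework (C := Ci pi a b c d) Hp Hs).
- by left; rewrite /= mem_nth.
- move=> st st' HU _ HC K; apply: (Ci_step _ _ _ _ _ _ _ _ _ HU HC K) => //;
    rewrite ?mem_nth ?Ic ?Ib ?Ia ?Id //.
- exact: Ci_ne.
Qed.


Lemma read_lt_inp pi st x y : U pi st -> y \in d1 st ++ d2 st ++ istk st ++ out st -> x \in inp st ->
  index y pi < index x pi.
Proof.
move=> HU Hy Hx; case: (u_drop HU) => k Hd.
exact: leq_trans (pos_read HU Hd Hy) (pos_inp HU Hd Hx).
Qed.

Lemma head_lt pi st v r b : U pi st -> inp st = v :: r -> b \in inp st -> b != v -> index v pi < index b pi.
Proof.
move=> HU E Hb Hne; case: (u_drop HU) => k Hd.
have Hbr : b \in r by move: Hb; rewrite E in_cons (negbTE Hne).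
have Hr : r = drop k.+1 pi by symmetry; apply: (drop_next (x := v)); rewrite -Hd E.
rewrite (pos_head HU Hd E); rewrite Hr in Hbr.
rewrite (index_drop (U_uniqpi HU) Hbr); exact: leq_addr.
Qed.

Lemma inp_read_ne pi st x y : U pi st -> x \in inp st -> y \in d1 st ++ d2 st ++ istk st ++ out st -> x != y.
Proof. move=> HU Hx Hy; apply/eqP => Exy; subst y; exact: (uniq_dis (U_cat HU) Hx Hy). Qed.

Ltac rd := rewrite ?mem_cat; (repeat (apply/orP; first [left; done | right])); done.

Record FF (pi : seq nat) (E B C A D : nat) : Prop := MkFF {
 f_AB : A < B; f_BC : B < C; f_CD : C < D; f_DE : D < E;
 f_pEB : index E pi < index B pi; f_pBC : index B pi < index C pi;
 f_pCA : index C pi < index A pi; f_pAD : index A pi < index D pi;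
 f_E : E \in pi; f_B : B \in pi; f_C : C \in pi; f_A : A \in pi; f_D : D \in pi }.

Definition NE1 (pi : seq nat) B C A := forall x, x \in pi -> index B pi < index x pi ->
  index x pi < index C pi -> x < A -> False.
Definition NE23 (pi : seq nat) E B A := forall y z, y \in pi -> z \in pi ->
  index E pi < index y pi -> index y pi < index z pi -> index z pi < index B pi ->
  z < A -> z < y -> y < B -> False.
Definition NE4567 (pi : seq nat) E B A D := forall w y z, w \in pi -> y \in pi -> z \in pi ->
  index w pi < index y pi -> index y pi < index E pi -> index E pi < index z pi ->
  index z pi < index B pi -> D < w -> z < A -> z < y -> y < B -> False.

Definition GP pi E B u v w st :=
  [/\ v < u, u < w, index u pi < index v pi, index E pi < index v pi & index v pi < index B pi] /\
  index w pi < index u pi /\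
      [\/ [/\ u \in d1 st, v \in inp st & (w \in d2 st \/ w \in istk st)],
          [/\ u \in d2 st, v \in inp st & w \in istk st] |
          [/\ u \in d2 st, v \in d1 st & w \in istk st]].

Definition PS pi E B st := (exists u, (u \in d1 st \/ u \in d2 st) /\ B < u) \/
  (exists u v w, GP pi E B u v w st).

Definition Phi pi E B st := B \in inp st /\
  [\/ E \in inp st, E \in d1 st, E \in d2 st | E \in istk st /\ PS pi E B st].

Definition Om (pi : seq nat) (B C : nat) st := [/\ B \in d1 st, C \in inp st &
  (exists2 z, z \in d2 st & B < z) \/ head 0 (d1 st) != B].

Definition Wx (pi : seq nat) (B C A : nat) st := exists x, [/\ x \in inp st, index x pi < index C pi, A < x, x < B &
  (B \in d1 st \/ B \in d2 st)].

Definition C2 pi E B C A D st := Phi pi E B st \/ Om pi B C st \/ Wx pi B C A st \/ Z pi A D st \/ J st.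

Lemma mkZ pi A D st x y dd : x \in d1 st -> y \in d1 st ++ d2 st -> dd \in Rl st ->
  A < x -> x < y -> y < dd -> dd <= D -> A \in inp st -> index A pi < index D pi -> D \in pi ->
  Z pi A D st.
Proof. by move=> *; exists x, y, dd; split; split. Qed.

Lemma mkJ st c a d : c \in istk st -> a \in Rl st -> d \in Rl st -> a < c -> c < d -> J st.
Proof. by move=> *; exists c, a, d; split. Qed.


Lemma Wx_step pi E B C A D st st' : FF pi E B C A D -> U pi st -> Wx pi B C A st -> stepK st st' ->
  Bad st' \/ C2 pi E B C A D st'.
Proof.
move=> F HU [x [Hx PxC HAx HxB HBl]] K.
have HC : C \in inp st by apply: (inp_later HU Hx (f_C F) PxC).
have HA : A \in inp st by apply: (inp_later HU Hx (f_A F)); exact: ltn_trans PxC (f_pCA F).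
case: K => [x0 r E0|x0 r E0 Hx0|x0 r E0 Hx0 H1|x0 r E0 Hx0 H1 H0].
- by right; right; right; left; exists x.
- right; right; right; left; exists x; split => //=; case: HBl => HB; last by right; rewrite in_cons HB orbT.
  move: HB; rewrite E0 in_cons => /orP [/eqP ->|?]; [by right; rewrite mem_head|by left].
- case: (eqVneq x x0) => [Ex|Hne].
    subst x0; case: HBl => HB; first by have := Hx0 _ HB; lia.
    right; right; right; right; left; apply: (mkZ (x := x) (y := B) (dd := C)) => //=.
    * by rewrite mem_head.
    * by mrw; rewrite HB ?orbT.
    * by rewrite inRl /= (inp_after HU E0 (f_C F) PxC).
    * exact: f_BC F.
    * exact: ltnW (f_CD F).
    * exact: (inp_after HU E0 (f_A F) (ltn_trans PxC (f_pCA F))).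
    * exact: f_pAD F.
    * exact: f_D F.
  right; right; right; left; exists x; split => //=; first exact: (inp_stay E0 Hx Hne).
  by case: HBl => HB; [left; rewrite in_cons HB orbT|right].
- case: (eqVneq B x0) => [EB|Hne].
    subst x0; right; right; right; right; right; exists B, A, C; split => //=.
    * by rewrite mem_head.
    * by rewrite inRl HA.
    * by rewrite inRl HC.
    * exact: f_AB F.
    * exact: f_BC F.
  right; right; right; left; exists x; split => //=.
  by case: HBl => HB; [left|right; move: HB; rewrite E0 in_cons (negbTE Hne)].
Qed.

Lemma Om_step pi E B C A D st st' : FF pi E B C A D -> NE1 pi B C A -> U pi st -> GI pi st ->
  Om pi B C st -> stepK st st' -> Bad st' \/ C2 pi E B C A D st'.
Proof.
move=> F N1 HU HG [HB HC Halt] K.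
have HA : A \in inp st by apply: (inp_later HU HC (f_A F) (f_pCA F)).
have S1 := u_s1 HU.
case: K => [x0 r E0|x0 r E0 Hx0|x0 r E0 Hx0 H1|x0 r E0 Hx0 H1 H0].
- by right; right; left; split.
- case: (eqVneq B x0) => [EB|Hne].
    exfalso; subst x0; case: Halt => [[z Hz HBz]|]; last by rewrite E0 /= eqxx.
    by have := Hx0 _ Hz; lia.
  have HBr : B \in r by move: HB; rewrite E0 in_cons (negbTE Hne).
  rewrite E0 in S1; have HBx := sgt_head S1 HBr.
  right; right; left; split => //=; left; exists x0 => //; exact: mem_head.
- case: (eqVneq C x0) => [EC|Hne].
    subst x0; right; right; right; right; left; apply: (mkZ (x := B) (y := C) (dd := D)) => //=.
    * by rewrite in_cons HB orbT.
    * by mrw; rewrite eqxx ?orbT.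
    * by rewrite inRl /= (inp_after HU E0 (f_D F) (ltn_trans (f_pCA F) (f_pAD F))).
    * exact: f_AB F.
    * exact: f_BC F.
    * exact: f_CD F.
    * exact: (inp_after HU E0 (f_A F) (f_pCA F)).
    * exact: f_pAD F.
    * exact: f_D F.
  right; right; left; split => //=.
  * by rewrite in_cons HB orbT.
  * exact: (inp_stay E0 HC Hne).
  * right; apply: (inp_read_ne HU); first by rewrite E0 mem_head.
    by rewrite mem_cat HB.
- case Hc: (has (fun z => B < z) r || (head 0 (d1 st) != B)).
    right; right; left; split => //=; case/orP: Hc => [/hasP [z Hz HBz]|->]; last by right.
    by left; exists z.
  move/negbT: Hc; rewrite negb_or negbK => /andP [/hasPn Hr /eqP Hh].
  case Ei: (inp st) HC => [|x r1] HC //.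
  case E1: (d1 st) Hh HB => [|h t] //= Hh HB; subst h.
  have HxB : x < B.
    move: H0; rewrite /d0_legal Ei E1 => /negbT; rewrite -leqNgt leq_eqVlt => /orP [/eqP Ex|//].
    exfalso; move: (inp_read_ne HU (x := x) (y := B)); rewrite Ei mem_head E1 mem_cat mem_head Ex eqxx.
    by move=> /(_ isT isT).
  have HxC : x != C by apply/eqP => Ex; move: HxB; rewrite Ex; have := f_BC F; lia.
  have PxC : index x pi < index C pi by apply: (head_lt HU Ei); rewrite ?Ei // eq_sym.
  have PBx : index B pi < index x pi by apply: (read_lt_inp HU); rewrite ?E1 ?Ei ?mem_cat ?mem_head.
  have Hxpi : x \in pi by apply: (in_pi HU); rewrite /remaining Ei !mem_cat mem_head.
  have HAx : A < x.
    rewrite ltnNge leq_eqVlt; apply/negP => /orP [/eqP Ex|Hlt].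
      subst x; have := ltn_trans PxC (f_pCA F); by rewrite ltnn.
    exact: N1 Hxpi PBx PxC Hlt.
  right; right; right; left; exists x; split => //=.
  * by rewrite ?Ei mem_head.
  * by left; rewrite ?E1 mem_head.
Qed.


Lemma ne_le_lt (a b : nat) : a != b -> ~~ (b < a) -> a < b.
Proof. rewrite -leqNgt leq_eqVlt => H /orP [/eqP E|//]; by rewrite E eqxx in H. Qed.

Lemma PS_new pi E B st x0 r : U pi st -> GI pi st -> B \in inp st -> (E \in d2 st \/ E \in istk st) ->
  d2 st = x0 :: r -> d1_legal st = false -> d0_legal st = false ->
  PS pi E B (St (inp st) (d1 st) r (x0 :: istk st) (out st)).
Proof.
move=> HU HG HB HE E2 H1 H0.
case Ei: (inp st) HB => [|v r1] HB //.
have Hv : v \in inp st by rewrite Ei mem_head.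
case E1: (d1 st) H1 H0 => [|u t] H1 H0.
  by move: H0; rewrite /d0_legal Ei E1.
have Hu : u \in d1 st by rewrite E1 mem_head.
have Hvu : v < u.
  apply: ne_le_lt; first by apply: (inp_read_ne HU Hv); rewrite mem_cat Hu.
  by move: H0; rewrite /d0_legal Ei E1 => ->.
have Hux : u < x0.
  apply: ne_le_lt; first by apply/eqP => Eu; apply: (dis12 HU Hu); rewrite E2 Eu mem_head.
  by move: H1; rewrite /d1_legal E1 E2 => ->.
case: (HG u Hu) => [[w Hw [Huw Pwu]]|[_ Hall]]; last first.
  by have := Hall x0; rewrite E2 mem_head => /(_ isT); lia.
rewrite -E1 -Ei.
case: (eqVneq v B) => [EvB|HvB].
  left; exists u; split; [by left | by rewrite -EvB].
right; exists u, v, w; split; [split|split] => //.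
- apply: (read_lt_inp HU _ Hv); by rewrite mem_cat Hu.
- apply: (read_lt_inp HU _ Hv); case: HE => HE; rewrite !mem_cat HE ?orbT //.
- apply: (head_lt HU Ei); by rewrite ?Ei // eq_sym.
- apply: Or31; split => //=; move: Hw; rewrite mem_cat E2 in_cons.
  case: (eqVneq w x0) => [->|_] /=; first by right; rewrite mem_head.
  by case/orP => H; [left|right; rewrite in_cons H orbT].
Qed.

Lemma tB_step pi E B C A D st r : FF pi E B C A D -> NE23 pi E B A -> NE4567 pi E B A D -> U pi st ->
  Phi pi E B st -> inp st = B :: r -> (forall t, t \in d1 st -> t < B) ->
  C2 pi E B C A D (St r (B :: d1 st) (d2 st) (istk st) (out st)).
Proof.
move=> F N23 N4567 HU [_ HEs] Ei Hx0.
have PBA : index B pi < index A pi := ltn_trans (f_pBC F) (f_pCA F).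
have PBD : index B pi < index D pi := ltn_trans PBA (f_pAD F).
have HC : C \in r := inp_after HU Ei (f_C F) (f_pBC F).
have HA : A \in r := inp_after HU Ei (f_A F) PBA.
have HD : D \in r := inp_after HU Ei (f_D F) PBD.
have HBE : B < E by have := f_BC F; have := f_CD F; have := f_DE F; lia.
have HAi : A \in inp st by rewrite Ei in_cons HA orbT.
have HDi : D \in inp st by rewrite Ei in_cons HD orbT.
have OmI : forall z, z \in d2 st -> B < z -> C2 pi E B C A D (St r (B :: d1 st) (d2 st) (istk st) (out st)).
  move=> z Hz HBz; right; left; split => //=; first by rewrite mem_head.
  by left; exists z.
case: HEs => [HE|HE|HE|[HE [[u [[Hu|Hu] HBu]]|[u [v [w [[Hvu Huw Puv PEv PvB] [Pwu HL]]]]]]]].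
- by exfalso; apply: (inp_head_ne HU Ei HE (f_pEB F)).
- by exfalso; have := Hx0 _ HE; lia.
- exact: OmI HE HBE.
- by exfalso; have := Hx0 _ Hu; lia.
- exact: OmI Hu HBu.
case: HL => [[Hu Hv Hw]|[Hu Hv Hw]|[Hu Hv Hw]].
- by exfalso; apply: (inp_head_ne HU Ei Hv PvB).
- by exfalso; apply: (inp_head_ne HU Ei Hv PvB).
case Hh: (has (fun z => B < z) (d2 st)).
  by case/hasP: Hh => z Hz HBz; apply: OmI Hz HBz.
have HuB : u < B.
  apply: ne_le_lt; last by move/hasPn: Hh => /(_ u Hu).
  by rewrite eq_sym; apply: (inp_read_ne HU (x := B)); rewrite ?Ei ?mem_head // !mem_cat Hu orbT.
have HvA : v != A by rewrite eq_sym; apply: (inp_read_ne HU HAi); rewrite mem_cat Hv.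
have Hupi : u \in pi by apply: (in_pi HU); rewrite /remaining !mem_cat Hu !orbT.
have Hvpi : v \in pi by apply: (in_pi HU); rewrite /remaining !mem_cat Hv !orbT.
have Hwpi : w \in pi by apply: (in_pi HU); rewrite /remaining !mem_cat Hw !orbT.
case: (ltngtP A v) => [HAv|HvA'|EAv]; last by rewrite EAv eqxx in HvA.
  right; right; right; left; apply: (mkZ (x := v) (y := B) (dd := C)) => //=.
  + by rewrite in_cons Hv orbT.
  + by rewrite mem_head.
  + by rewrite inRl HC.
  + exact: ltn_trans Hvu HuB.
  + exact: f_BC F.
  + exact: ltnW (f_CD F).
  + exact: f_pAD F.
  + exact: f_D F.
case: (ltngtP (index E pi) (index u pi)) => [PEu|PuE|EEu].
- by exfalso; apply: (N23 u v Hupi Hvpi PEu Puv PvB HvA' Hvu HuB).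
- have HwD : w != D by rewrite eq_sym; apply: (inp_read_ne HU HDi); rewrite !mem_cat Hw !orbT.
  case: (ltngtP D w) => [HDw|HwD'|EDw]; last by rewrite EDw eqxx in HwD.
    by exfalso; apply: (N4567 w u v Hwpi Hupi Hvpi Pwu PuE PEv PvB HDw HvA' Hvu HuB).
  have HwA : w != A by rewrite eq_sym; apply: (inp_read_ne HU HAi); rewrite !mem_cat Hw !orbT.
  case: (ltngtP A w) => [HAw|HwA'|EAw]; last by rewrite EAw eqxx in HwA.
    right; right; right; right; apply: (mkJ (c := w) (a := A) (d := D)) => //=.
    * by rewrite inRl HA.
    * by rewrite inRl HD.
  right; right; right; right; apply: (mkJ (c := w) (a := u) (d := B)) => //=.
  * by rewrite inRl Hu !orbT.
  * by rewrite inRl in_cons eqxx !orbT.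
  * exact: ltn_trans HwA' (f_AB F).
- exfalso; have := pos_inj Hupi (f_E F) (esym EEu) => Eu; move: HuB HBE; rewrite Eu => H1 H2.
  by have := ltn_trans H1 H2; rewrite ltnn.
Qed.

Lemma mkGP pi E B u v w st : v < u -> u < w -> index u pi < index v pi -> index E pi < index v pi ->
  index v pi < index B pi -> index w pi < index u pi ->
  [\/ [/\ u \in d1 st, v \in inp st & (w \in d2 st \/ w \in istk st)],
          [/\ u \in d2 st, v \in inp st & w \in istk st] |
          [/\ u \in d2 st, v \in d1 st & w \in istk st]] -> GP pi E B u v w st.
Proof. by move=> *; split; [split|split]. Qed.

Lemma Phi_step pi E B C A D st st' : FF pi E B C A D -> NE23 pi E B A -> NE4567 pi E B A D ->
  U pi st -> GI pi st -> Phi pi E B st -> stepK st st' -> Bad st' \/ C2 pi E B C A D st'.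
Proof.
move=> F N23 N4567 HU HG HPhi K.
have HBE : B < E by have := f_BC F; have := f_CD F; have := f_DE F; lia.
have S1 := u_s1 HU; have S2 := u_s2 HU.
case: (HPhi) => HB HEs.
case: K => [x0 r E0|x0 r E0 Hx0|x0 r E0 Hx0 H1|x0 r E0 Hx0 H1 H0].
-
  case: HEs => [HE|HE|HE|[HE HPS]]; try by right; left; split => //; constructor.
  case: (eqVneq E x0) => [EE|HEne].
    left; apply: (pop_bad E0 (y := B)); last by rewrite -EE.
    by rewrite /remaining !mem_cat HB.
  have HE' : E \in r by move: HE; rewrite E0 in_cons (negbTE HEne).
  case: HPS => [[u [Hu HBu]]|[u [v [w [[Hvu Huw Puv PEv PvB] [Pwu HL]]]]]].
    by right; left; split => //; apply: Or44; split => //; left; exists u.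
  have Hwr : w \in istk st -> (w == x0) = false \/ Bad (St (inp st) (d1 st) (d2 st) r (rcons (out st) x0)).
    move=> Hw; case: (eqVneq w x0) => [Ew|]; last by left.
    right; apply: (pop_bad E0 (y := u)); last by rewrite -Ew.
    by case: HL => [[Hu _ _]|[Hu _ _]|[Hu _ _]]; rewrite /remaining !mem_cat Hu ?orbT.
  case: HL => [[Hu Hv [Hw|Hw]]|[Hu Hv Hw]|[Hu Hv Hw]].
  + right; left; split => //; apply: Or44; split => //; right; exists u, v, w.
    by apply: mkGP => //; apply: Or31; split => //; left.
  + case: (Hwr Hw) => [Hne|]; last by left.
    right; left; split => //; apply: Or44; split => //; right; exists u, v, w.
    apply: mkGP => //; apply: Or31; split => //; right; by move: Hw; rewrite E0 in_cons Hne.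
  + case: (Hwr Hw) => [Hne|]; last by left.
    right; left; split => //; apply: Or44; split => //; right; exists u, v, w.
    apply: mkGP => //; apply: Or32; split => //; by move: Hw; rewrite E0 in_cons Hne.
  + case: (Hwr Hw) => [Hne|]; last by left.
    right; left; split => //; apply: Or44; split => //; right; exists u, v, w.
    apply: mkGP => //; apply: Or33; split => //; by move: Hw; rewrite E0 in_cons Hne.
-
  have Hd1 : forall y, y \in d1 st -> y != x0 -> y \in r.
    by move=> y; rewrite E0 in_cons => /orP [->|].
  right; left; split => //=.
  case: HEs => [HE|HE|HE|[HE HPS]].
  + exact: Or41.
  + case: (eqVneq E x0) => [->|Hne]; first by apply: Or43; rewrite mem_head.
    by apply: Or42; apply: Hd1.
  + by apply: Or43; rewrite in_cons HE orbT.
  apply: Or44; split => //.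
  case: HPS => [[u [[Hu|Hu] HBu]]|[u [v [w [[Hvu Huw Puv PEv PvB] [Pwu HL]]]]]].
  + left; exists u; split => //=; case: (eqVneq u x0) => [->|Hne]; first by right; rewrite mem_head.
    by left; apply: Hd1.
  + by left; exists u; split => //=; right; rewrite in_cons Hu orbT.
  right; exists u, v, w; apply: mkGP => //=.
  case: HL => [[Hu Hv Hw]|[Hu Hv Hw]|[Hu Hv Hw]].
  + case: (eqVneq u x0) => [Eu|Hne].
      subst x0; case: Hw => Hw; first by have := Hx0 _ Hw; rewrite ltnNge ltnW.
      by apply: Or32; rewrite mem_head.
    apply: Or31; split => //; [exact: Hd1 | by case: Hw => Hw; [left; rewrite in_cons Hw orbT|right]].
  + by apply: Or32; rewrite in_cons Hu orbT.
  + apply: Or33; split => //; first by rewrite in_cons Hu orbT.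
    apply: Hd1 => //; apply/eqP => Ev; subst x0.
    by have := Hx0 _ Hu; rewrite ltnNge ltnW.
-
  case: (eqVneq x0 B) => [EB|HBne].
    by subst x0; right; apply: (tB_step F N23 N4567 HU HPhi E0 Hx0).
  have HBr : B \in r by apply: (inp_stay E0 HB); rewrite eq_sym.
  right; left; split => //=.
  case: HEs => [HE|HE|HE|[HE HPS]].
  + case: (eqVneq E x0) => [->|Hne]; first by apply: Or42; rewrite mem_head.
    by apply: Or41; apply: (inp_stay E0 HE).
  + by apply: Or42; rewrite in_cons HE orbT.
  + exact: Or43.
  apply: Or44; split => //.
  case: HPS => [[u [[Hu|Hu] HBu]]|[u [v [w [[Hvu Huw Puv PEv PvB] [Pwu HL]]]]]].
  + by left; exists u; split => //=; left; rewrite in_cons Hu orbT.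
  + by left; exists u; split => //=; right.
  right; exists u, v, w; apply: mkGP => //=.
  case: HL => [[Hu Hv Hw]|[Hu Hv Hw]|[Hu Hv Hw]].
  + apply: Or31; split => //; first by rewrite in_cons Hu orbT.
    apply: (inp_stay E0 Hv); apply/eqP => Ev; subst x0.
    by have := Hx0 _ Hu; rewrite ltnNge ltnW.
  + case: (eqVneq v x0) => [Ev|Hne].
      by subst x0; apply: Or33; rewrite mem_head.
    by apply: Or32; split => //; apply: (inp_stay E0 Hv).
  + by apply: Or33; rewrite in_cons Hv orbT.
-
  have Hd2 : forall y, y \in d2 st -> y != x0 -> y \in r.
    by move=> y; rewrite E0 in_cons => /orP [->|].
  right; left; split => //=.
  case: HEs => [HE|HE|HE|[HE HPS]].
  + exact: Or41.
  + exact: Or42.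
  + case: (eqVneq E x0) => [EE|Hne]; last by apply: Or43; apply: Hd2.
    apply: Or44; split; first by rewrite EE mem_head.
    by apply: (PS_new HU HG HB _ E0 H1 H0); left.
  apply: Or44; split; first by rewrite in_cons HE orbT.
  by apply: (PS_new HU HG HB _ E0 H1 H0); right.
Qed.


Lemma C2_step pi E B C A D st st' : FF pi E B C A D -> NE1 pi B C A -> NE23 pi E B A ->
  NE4567 pi E B A D -> U pi st -> GI pi st -> C2 pi E B C A D st -> stepK st st' ->
  Bad st' \/ C2 pi E B C A D st'.
Proof.
move=> F N1 N23 N4567 HU HG HC K.
case: HC => [H|[H|[H|[H|H]]]].
- exact: Phi_step F N23 N4567 HU HG H K.
- exact: Om_step F N1 HU HG H K.
- exact: Wx_step F HU H K.
- case: (Z_step HU H K) => [?|[?|?]]; [by left|by right; right; right; right; left|by right; right; right; right; right].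
- case: (J_step HU H K) => [?|?]; [by left|by right; right; right; right; right].
Qed.

Lemma C2_ne pi E B C A D st : C2 pi E B C A D st -> remaining st = [::] -> False.
Proof.
rewrite /remaining => HC Em.
have Hin : forall y, y \in inp st ++ d1 st ++ d2 st ++ istk st -> False by move=> y; rewrite Em.
case: HC => [[HB _]|[[_ HC _]|[[x [Hx _ _ _ _]]|[[x [y [dd [_ [HA _ _]]]]]|[c' [a' [d' [_ Ha' _ _ _]]]]]]]].
- by apply: (Hin B); rewrite mem_cat HB.
- by apply: (Hin C); rewrite mem_cat HC.
- by apply: (Hin x); rewrite mem_cat Hx.
- by apply: (Hin A); rewrite mem_cat HA.
- apply: (Hin a'); move: Ha'; rewrite /Rl !mem_cat => /or3P [->|->|->]; by rewrite ?orbT.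
Qed.

Lemma occ_of (pi p J vs : seq nat) : sorted ltn J -> size J = size p -> all (fun i => i < size pi) J ->
  map (nth 0 pi) J = vs ->
  (forall a b, a < size p -> b < size p -> (nth 0 vs a < nth 0 vs b) = (nth 0 p a < nth 0 p b)) ->
  occurrence p pi J.
Proof.
move=> Hs Hsz Ha Hm Hv; split => // a b Hap Hbp.
by rewrite -!(nth_map 0 0 (nth 0 pi)) ?Hsz // Hm Hv.
Qed.


Ltac isotac := match goal with |- forall a b, _ => let a := fresh "a" in let b := fresh "b" in
  move=> a b; case: a => [|[|[|[|[|[|[|[|a]]]]]]]]; case: b => [|[|[|[|[|[|[|[|b]]]]]]]];
  rewrite /= ?ltnS ?ltn0 //= => _ _; cmpl end.

Lemma iso1 E B x C A D : x < A -> A < B -> B < C -> C < D -> D < E ->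
  forall a b, a < 6 -> b < 6 -> (nth 0 [:: E; B; x; C; A; D] a < nth 0 [:: E; B; x; C; A; D] b) =
                                 (nth 0 [:: 6; 3; 1; 4; 2; 5] a < nth 0 [:: 6; 3; 1; 4; 2; 5] b).
Proof. repeat match goal with |- is_true _ -> _ => intro end; isotac. Qed.

Lemma iso2 E u v B C A D : v < u -> u < A -> A < B -> B < C -> C < D -> D < E ->
  forall a b, a < 7 -> b < 7 -> (nth 0 [:: E; u; v; B; C; A; D] a < nth 0 [:: E; u; v; B; C; A; D] b) =
                                 (nth 0 [:: 7; 2; 1; 4; 5; 3; 6] a < nth 0 [:: 7; 2; 1; 4; 5; 3; 6] b).
Proof. repeat match goal with |- is_true _ -> _ => intro end; isotac. Qed.

Lemma iso3 E u v B C A D : v < A -> A < u -> u < B -> B < C -> C < D -> D < E ->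
  forall a b, a < 7 -> b < 7 -> (nth 0 [:: E; u; v; B; C; A; D] a < nth 0 [:: E; u; v; B; C; A; D] b) =
                                 (nth 0 [:: 7; 3; 1; 4; 5; 2; 6] a < nth 0 [:: 7; 3; 1; 4; 5; 2; 6] b).
Proof. repeat match goal with |- is_true _ -> _ => intro end; isotac. Qed.

Lemma iso4 w u E v B C A D : v < u -> u < A -> A < B -> B < C -> C < D -> D < w -> w < E ->
  forall a b, a < 8 -> b < 8 -> (nth 0 [:: w; u; E; v; B; C; A; D] a < nth 0 [:: w; u; E; v; B; C; A; D] b) =
                                 (nth 0 [:: 7; 2; 8; 1; 4; 5; 3; 6] a < nth 0 [:: 7; 2; 8; 1; 4; 5; 3; 6] b).
Proof. repeat match goal with |- is_true _ -> _ => intro end; isotac. Qed.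

Lemma iso5 w u E v B C A D : v < A -> A < u -> u < B -> B < C -> C < D -> D < w -> w < E ->
  forall a b, a < 8 -> b < 8 -> (nth 0 [:: w; u; E; v; B; C; A; D] a < nth 0 [:: w; u; E; v; B; C; A; D] b) =
                                 (nth 0 [:: 7; 3; 8; 1; 4; 5; 2; 6] a < nth 0 [:: 7; 3; 8; 1; 4; 5; 2; 6] b).
Proof. repeat match goal with |- is_true _ -> _ => intro end; isotac. Qed.

Lemma iso6 w u E v B C A D : v < u -> u < A -> A < B -> B < C -> C < D -> D < E -> E < w ->
  forall a b, a < 8 -> b < 8 -> (nth 0 [:: w; u; E; v; B; C; A; D] a < nth 0 [:: w; u; E; v; B; C; A; D] b) =
                                 (nth 0 [:: 8; 2; 7; 1; 4; 5; 3; 6] a < nth 0 [:: 8; 2; 7; 1; 4; 5; 3; 6] b).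
Proof. repeat match goal with |- is_true _ -> _ => intro end; isotac. Qed.

Lemma iso7 w u E v B C A D : v < A -> A < u -> u < B -> B < C -> C < D -> D < E -> E < w ->
  forall a b, a < 8 -> b < 8 -> (nth 0 [:: w; u; E; v; B; C; A; D] a < nth 0 [:: w; u; E; v; B; C; A; D] b) =
                                 (nth 0 [:: 8; 3; 7; 1; 4; 5; 2; 6] a < nth 0 [:: 8; 3; 7; 1; 4; 5; 2; 6] b).
Proof. repeat match goal with |- is_true _ -> _ => intro end; isotac. Qed.


Lemma part_ii pi : is_perm pi -> qlg2_sortable pi ->
  forall idx, occurrence [:: 5; 2; 3; 1; 4] pi idx -> exists2 P, P \in dotted_list & extends_to pi idx P.
Proof.
move=> Hp Hs idx Hocc; apply: NNPP => Hno.
have Hu : uniq pi by rewrite (perm_uniq Hp) iota_uniq.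
have Hocc' := Hocc; case: Hocc' => Hsort Hsz Hall _.
case: idx Hocc Hsort Hsz Hall Hno => [|i0 [|i1 [|i2 [|i3 [|i4 [|??]]]]]] //= Hocc Hsort _ Hall Hno.
move: Hsort Hall => /and5P [H01 H12 H23 H34 _] /and5P [Hi0 Hi1 Hi2 Hi3 /andP [Hi4 _]].
set E := nth 0 pi i0; set B := nth 0 pi i1; set C := nth 0 pi i2; set A := nth 0 pi i3;
  set D := nth 0 pi i4.
have HAB : A < B by have := occ_nth Hocc (a := 3) (b := 1); rewrite /= => ->.
have HBC : B < C by have := occ_nth Hocc (a := 1) (b := 2); rewrite /= => ->.
have HCD : C < D by have := occ_nth Hocc (a := 2) (b := 4); rewrite /= => ->.
have HDE : D < E by have := occ_nth Hocc (a := 4) (b := 0); rewrite /= => ->.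
have IE : index E pi = i0 by rewrite index_uniq.
have IB : index B pi = i1 by rewrite index_uniq.
have IC : index C pi = i2 by rewrite index_uniq.
have IA : index A pi = i3 by rewrite index_uniq.
have ID : index D pi = i4 by rewrite index_uniq.
have F : FF pi E B C A D.
  by constructor; rewrite ?IE ?IB ?IC ?IA ?ID ?mem_nth.
have Hpos : forall x, x \in pi -> index x pi < size pi by move=> x; rewrite index_mem.
have N1 : NE1 pi B C A.
  move=> x Hx P1 P2 HxA; apply: Hno.
  exists ([:: 6; 3; 1; 4; 2; 5], [:: false; false; true; false; false; false]); first by [].
  exists [:: i0; i1; index x pi; i2; i3; i4]; split; last by [].
  rewrite IB IC in P1 P2.
  apply: (occ_of (vs := [:: E; B; x; C; A; D])); rewrite /= ?H01 ?P1 ?P2 ?H23 ?H34 ?Hi0 ?Hi1 ?Hi2 ?Hi3 ?Hi4 ?Hpos ?nth_index //.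
  by apply: iso1.
have N23 : NE23 pi E B A.
  move=> y z Hy Hz P1 P2 P3 HzA Hzy HyB; apply: Hno.
  rewrite IE IB in P1 P3.
  have HyA : y != A.
    apply/eqP => EyA; have := ltn_trans P2 P3; rewrite EyA IA => H.
    by have := ltn_trans H (ltn_trans H12 H23); rewrite ltnn.
  have Hsrt : sorted ltn [:: i0; index y pi; index z pi; i1; i2; i3; i4].
    by rewrite /= P1 P2 P3 H12 H23 H34.
  have Hal : all (fun i => i < size pi) [:: i0; index y pi; index z pi; i1; i2; i3; i4].
    by rewrite /= ?Hi0 ?Hi1 ?Hi2 ?Hi3 ?Hi4 ?Hpos.
  have Hmap : map (nth 0 pi) [:: i0; index y pi; index z pi; i1; i2; i3; i4] = [:: E; y; z; B; C; A; D].
    by rewrite /= !nth_index.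
  case: (ltngtP y A) => [HyA'|HAy|EyA]; last by rewrite EyA eqxx in HyA.
    exists ([:: 7; 2; 1; 4; 5; 3; 6], [:: false; true; true; false; false; false; false]); first by [].
    exists [:: i0; index y pi; index z pi; i1; i2; i3; i4]; split; last by [].
    apply: (occ_of (vs := [:: E; y; z; B; C; A; D]) Hsrt) => //; by apply: iso2.
  exists ([:: 7; 3; 1; 4; 5; 2; 6], [:: false; true; true; false; false; false; false]); first by [].
  exists [:: i0; index y pi; index z pi; i1; i2; i3; i4]; split; last by [].
  apply: (occ_of (vs := [:: E; y; z; B; C; A; D]) Hsrt) => //; by apply: iso3.
have N4567 : NE4567 pi E B A D.
  move=> w y z Hw Hy Hz P1 P2 P3 P4 HDw HzA Hzy HyB; apply: Hno.
  rewrite IE in P2 P3; rewrite IB in P4.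
  have HyA : y != A.
    apply/eqP => EyA; have := ltn_trans P2 (ltn_trans H01 (ltn_trans H12 H23)).
    by rewrite EyA IA ltnn.
  have HwE : w != E.
    apply/eqP => EwE; move: P1; rewrite EwE IE => P1.
    by have := ltn_trans P1 P2; rewrite ltnn.
  have Hsrt : sorted ltn [:: index w pi; index y pi; i0; index z pi; i1; i2; i3; i4].
    by rewrite /= P1 P2 P3 P4 H12 H23 H34.
  have Hal : all (fun i => i < size pi) [:: index w pi; index y pi; i0; index z pi; i1; i2; i3; i4].
    by rewrite /= ?Hi0 ?Hi1 ?Hi2 ?Hi3 ?Hi4 ?Hpos.
  have Hmap : map (nth 0 pi) [:: index w pi; index y pi; i0; index z pi; i1; i2; i3; i4] =
              [:: w; y; E; z; B; C; A; D].
    by rewrite /= !nth_index.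
  case: (ltngtP y A) => [HyA'|HAy|EyA]; [ | | by rewrite EyA eqxx in HyA];
    (case: (ltngtP w E) => [HwE'|HEw|EwE]; [ | | by rewrite EwE eqxx in HwE]).
  + exists ([:: 7; 2; 8; 1; 4; 5; 3; 6], [:: true; true; false; true; false; false; false; false]); first by [].
    exists [:: index w pi; index y pi; i0; index z pi; i1; i2; i3; i4]; split; last by [].
    apply: (occ_of (vs := [:: w; y; E; z; B; C; A; D]) Hsrt) => //; by apply: iso4.
  + exists ([:: 8; 2; 7; 1; 4; 5; 3; 6], [:: true; true; false; true; false; false; false; false]); first by [].
    exists [:: index w pi; index y pi; i0; index z pi; i1; i2; i3; i4]; split; last by [].
    apply: (occ_of (vs := [:: w; y; E; z; B; C; A; D]) Hsrt) => //; by apply: iso6.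
  + exists ([:: 7; 3; 8; 1; 4; 5; 2; 6], [:: true; true; false; true; false; false; false; false]); first by [].
    exists [:: index w pi; index y pi; i0; index z pi; i1; i2; i3; i4]; split; last by [].
    apply: (occ_of (vs := [:: w; y; E; z; B; C; A; D]) Hsrt) => //; by apply: iso5.
  + exists ([:: 8; 3; 7; 1; 4; 5; 2; 6], [:: true; true; false; true; false; false; false; false]); first by [].
    exists [:: index w pi; index y pi; i0; index z pi; i1; i2; i3; i4]; split; last by [].
    apply: (occ_of (vs := [:: w; y; E; z; B; C; A; D]) Hsrt) => //; by apply: iso7.
apply: (framework (C := C2 pi E B C A D) Hp Hs).
- left; split; first by rewrite /= mem_nth.
  by apply: Or41; rewrite /= mem_nth.
- move=> st st' HU HG HC K; exact: (C2_step F N1 N23 N4567 HU HG HC K).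
- exact: C2_ne.
Qed.

Theorem mainTheorem13 (pi : seq nat) :
  is_perm pi -> qlg2_sortable pi ->
  avoids [:: 3; 2; 1; 4] pi /\
  (forall idx, occurrence [:: 5; 2; 3; 1; 4] pi idx ->
     exists2 P, P \in dotted_list & extends_to pi idx P).
Proof. move=> Hp Hs; split; [exact: part_i | exact: part_ii]. Qed.
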